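(* Let $\mathcal{A}=\{A_1,\dots,A_m\}\subseteq\mathbb{R}^{n\times n}$, let $r\ge1$ be an integer, and let $J\subseteq[n]$ be such that for every $i\in[m]$ and every $j\in J$ the $j$-th column of $A_i$ is zero. Define $\mathscr{A}^{(0)}=\{2r\,\mathbf{e}_j: j\in[n]\}$ and, for $s\ge1$, $\mathscr{A}^{(s)}=\mathscr{A}^{(s-1)}\cup\bigcup_{i=1}^m\operatorname{supp}(p_{s-1}(A_i\mathbf{x}))$, where $p_{s-1}(\mathbf{x})=\sum_{\alpha\in\mathscr{A}^{(s-1)}}c_\alpha\mathbf{x}^\alpha$ with coefficients $c_\alpha\in(0,1)$ chosen arbitrarily at each step. Then $\mathscr{A}^{(s)}\subseteq\tilde{\mathbb{N}}^{n-|J|}_{2r}\cup\{\mathbf{b}_j\}_{j\in J}$ for all $s\ge1$.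
   Context: $\mathbf{e}_j$ is the $j$-th unit vector of $\mathbb{N}^n$ and $\mathbf{b}_j=2r\,\mathbf{e}_j$. $\tilde{\mathbb{N}}^{n-|J|}_{2r}=\{\alpha\in\mathbb{N}^n:\sum_i\alpha_i\le 2r,\ \alpha_i=0\text{ for }i\in J\}$. $p(A_i\mathbf{x})$ denotes the polynomial $\mathbf{x}\mapsto p(A_i\mathbf{x})$, and $\operatorname{supp}$ the set of exponents of its monomials with nonzero coefficients. *)

(* Defs.v *)
From HB Require Import structures.
From mathcomp Require Import all_boot all_order all_algebra.
From mathcomp Require Import mpoly.
Set Implicit Arguments. Unset Strict Implicit. Unset Printing Implicit Defensive.
Import Order.TTheory GRing.Theory Num.Theory.
Local Open Scope ring_scope.

Definition bvec (n r : nat) (j : 'I_n) : 'X_{1..n} := (U_(j) *+ (2 * r))%MM.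

Definition linsubst (R : realFieldType) (n : nat) (A : 'M[R]_n)
    (p : {mpoly R[n]}) : {mpoly R[n]} :=
  p \mPo [tuple \sum_(l < n) A k l *: 'X_l | k < n].

Definition polyOn (R : realFieldType) (n : nat) (S : seq 'X_{1..n})
    (c : 'X_{1..n} -> R) : {mpoly R[n]} :=
  \sum_(a <- S) c a *: 'X_[a].

(* The exponent sets script-A^(s), as duplicate-free lists; c s alpha is the
   coefficient c_alpha chosen at step s (used to form p_s). *)
Fixpoint expSet (R : realFieldType) (n m r : nat) (A : 'I_m -> 'M[R]_n)
    (c : nat -> 'X_{1..n} -> R) (s : nat) : seq 'X_{1..n} :=
  match s with
  | 0 => undup [seq bvec r j | j <- enum 'I_n]
  | s'.+1 =>
      let S := expSet r A c s' in
      undup (S ++ flatten [seq msupp (linsubst (A i) (polyOn S (c s'))) | i <- enum 'I_m])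
  end.

Definition tildeN (n r : nat) (J : {set 'I_n}) (a : 'X_{1..n}) : Prop :=
  (mdeg a <= 2 * r)%N /\ forall j, j \in J -> a j = 0%N.

(* Main.v *)
Require Import Defs.
From HB Require Import structures.
From mathcomp Require Import all_boot all_order all_algebra.
From mathcomp Require Import mpoly.
Import Order.TTheory GRing.Theory Num.Theory.
Local Open Scope ring_scope.

Section Aux.
Variables (R : realFieldType) (n : nat) (J : {set 'I_n}).

Definition Good (d : nat) (q : {mpoly R[n]}) :=
  forall m, m \in msupp q -> (mdeg m <= d)%N /\ forall j, j \in J -> m j = 0%N.

Lemma Good_le d e q : (d <= e)%N -> Good d q -> Good e q.
Proof. by move=> de G m /G [h1 h2]; split=> //; apply: leq_trans de. Qed.

Lemma Good0 d : Good d 0.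
Proof. by move=> m; rewrite msupp0. Qed.

Lemma GoodD d p q : Good d p -> Good d q -> Good d (p + q).
Proof. by move=> Gp Gq m /msuppD_le; rewrite mem_cat => /orP [/Gp|/Gq]. Qed.

Lemma GoodZ d c p : Good d p -> Good d (c *: p).
Proof. by move=> Gp m /msuppZ_le /Gp. Qed.

Lemma Good_sum (I : Type) (s : seq I) d (F : I -> {mpoly R[n]}) :
  (forall i, Good d (F i)) -> Good d (\sum_(i <- s) F i).
Proof.
move=> H; elim: s => [|x s IH]; first by rewrite big_nil; apply: Good0.
by rewrite big_cons; apply: GoodD.
Qed.

Lemma GoodM d e p q : Good d p -> Good e q -> Good (d + e) (p * q).
Proof.
move=> Gp Gq m /msuppM_le /allpairsP [[m1 m2] /= [/Gp [h1 h2] /Gq [h3 h4] ->]].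
split; first by rewrite mdegD leq_add.
by move=> j hj; rewrite mnmDE h2 // h4.
Qed.

Lemma Good1 : Good 0 1.
Proof.
move=> m; rewrite -mpolyC1 msupp1 mem_seq1 => /eqP ->.
by split; [rewrite mdeg0 | move=> j _; rewrite mnm0E].
Qed.

Lemma GoodX d p e : Good d p -> Good (d * e) (p ^+ e).
Proof.
move=> G; elim: e => [|e IH]; first by rewrite expr0 muln0; apply: Good1.
by rewrite exprS mulnS; apply: GoodM.
Qed.

Lemma Good_prod (d : 'I_n -> nat) (F : 'I_n -> {mpoly R[n]}) :
  (forall i, Good (d i) (F i)) -> Good (\sum_i d i) (\prod_i F i).
Proof.
move=> H; apply: (big_rec2 (fun a b => Good a b)); first exact: Good1.
by move=> i a b _ G; apply: GoodM.
Qed.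

Variable (A : 'M[R]_n).
Hypothesis HA : forall j, j \in J -> forall k, A k j = 0.

Lemma Good_lin k : Good 1 (\sum_(l < n) A k l *: 'X_l).
Proof.
apply: Good_sum => l.
case: (boolP (l \in J)) => hl.
  by rewrite HA // scale0r; apply: Good0.
apply: GoodZ => m; rewrite msuppX mem_seq1 => /eqP ->.
split; first by rewrite mdeg1.
move=> j hj; rewrite mnm1E; apply/eqP; rewrite eqb0.
by apply/eqP => e; move: hl; rewrite e hj.
Qed.

Lemma Good_linsubst d p :
  (forall m, m \in msupp p -> (mdeg m <= d)%N) -> Good d (linsubst A p).
Proof.
move=> H; rewrite /linsubst comp_mpolyEX.
elim: (msupp p) H => [|x s IH] H; first by rewrite big_nil; apply: Good0.
rewrite big_cons; apply: GoodD; last by apply: IH => m hm; apply: H; rewrite inE hm orbT.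
apply: GoodZ; rewrite comp_mpolyX.
apply: (@Good_le (\sum_i (1 * x i))%N d).
  rewrite (eq_bigr (fun i => x i)) => [|i _]; last by rewrite mul1n.
  by rewrite -mdegE; apply: H; rewrite inE eqxx.
apply: Good_prod => i; rewrite tnth_mktuple; apply: GoodX; apply: Good_lin.
Qed.
End Aux.

Lemma expSet0 (R : realFieldType) (n m r : nat) (A : 'I_m -> 'M[R]_n) c :
  expSet r A c 0 = undup [seq bvec r j | j <- enum 'I_n].
Proof. by []. Qed.
Lemma expSetS (R : realFieldType) (n m r : nat) (A : 'I_m -> 'M[R]_n) c s :
  expSet r A c s.+1 = undup (expSet r A c s ++ flatten [seq msupp (linsubst (A i)
     (polyOn (expSet r A c s) (c s))) | i <- enum 'I_m]).
Proof. by []. Qed.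

Theorem proposition11p1 (R : realFieldType) (n m r : nat)
    (A : 'I_m -> 'M[R]_n) (J : {set 'I_n})
    (c : nat -> 'X_{1..n} -> R) :
  (1 <= r)%N ->
  (forall (i : 'I_m) (j : 'I_n), j \in J -> forall k : 'I_n, A i k j = 0) ->
  (forall (s : nat) (a : 'X_{1..n}), 0 < c s a < 1) ->
  forall s : nat, (1 <= s)%N ->
  forall a : 'X_{1..n}, a \in expSet r A c s ->
    tildeN r J a \/ exists2 j : 'I_n, j \in J & a = bvec r j.
Proof.
move=> _ HA _ s _.
have degb : forall j : 'I_n, mdeg (bvec r j) = (2 * r)%N.
  by move=> j; rewrite /bvec mdegMn mdeg1 mul1n.
have Pdeg : forall a, (tildeN r J a \/ exists2 j : 'I_n, j \in J & a = bvec r j) ->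
   (mdeg a <= 2 * r)%N.
  by move=> a [[]//|[j _ ->]]; rewrite degb.
elim: s => [|s IH] a.
  rewrite expSet0 mem_undup => /mapP [j _ ->].
  case: (boolP (j \in J)) => hj; first by right; exists j.
  left; split; first by rewrite degb.
  move=> k hk; rewrite /bvec mulmnE mnm1E; case: eqP => [e|//]; move: hj.
  by rewrite e hk.
rewrite expSetS mem_undup mem_cat => /orP [/IH //|/flatten_mapP [i _ hi]].
left.
have Hd : forall mm, mm \in msupp (polyOn (expSet r A c s) (c s)) -> (mdeg mm <= 2 * r)%N.
  move=> mm /msupp_sum_le /flatten_mapP [b]; rewrite filter_predT => hb.
  by move/msuppZ_le; rewrite msuppX mem_seq1 => /eqP ->; apply: Pdeg; apply: IH.
have [h1 h2] := @Good_linsubst R n J (A i) (HA i) (2 * r) _ Hd a hi.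
by split.
Qed.
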